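(* There exists $n_0$ such that for all $n\ge n_0$, $\mathrm{ex}(n,S_4,K_4)=\mathcal{N}(S_4,T_3(n))$; that is, $S_4$ is $4$-Tur\'an-good.
   Context: $S_4$ is the star on $4$ vertices (a center with three leaves). $T_3(n)$ is the complete $3$-partite graph on $n$ vertices with part sizes $\lfloor n/3\rfloor$ or $\lceil n/3\rceil$. For graphs $H,G$, $\mathcal{N}(H,G)$ is the number of subgraphs of $G$ isomorphic to $H$, and $\mathrm{ex}(n,H,F)$ is the maximum of $\mathcal{N}(H,G)$ over $F$-free graphs $G$ on $n$ vertices. A graph $H$ is $k$-Tur\'an-good if $\mathrm{ex}(n,H,K_k)=\mathcal{N}(H,T_{k-1}(n))$ for all sufficiently large $n$. *)

(* Defs.v *)
From mathcomp Require Import all_boot.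
Set Implicit Arguments. Unset Strict Implicit. Unset Printing Implicit Defensive.

Definition simple_graph (T : finType) (E : {set {set T}}) : bool :=
  [forall e in E, #|e| == 2].

Definition iso_to (T V : finType) (EH : {set {set V}})
    (U : {set T}) (F : {set {set T}}) : bool :=
  [exists f : {ffun V -> T},
     [&& injectiveb f, f @: [set: V] == U &
         [forall e : {set V}, (e \in EH) == (f @: e \in F)]]].

Definition count_copies (V : finType) (EH : {set {set V}})
    (T : finType) (E : {set {set T}}) : nat :=
  #|[set p : {set T} * {set {set T}} |
      [&& p.2 \subset E, [forall e in p.2, e \subset p.1] &
          iso_to EH p.1 p.2]]|.

Definition complete_graph (k : nat) : {set {set 'I_k}} :=
  [set e : {set 'I_k} | #|e| == 2].

Definition star4 : {set {set 'I_4}} :=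
  [set [set ord0; i] | i : 'I_4 & i != ord0].

(* Turan graph T_r(n) on 'I_n: vertex i in part (i mod r); parts have sizes
   floor(n/r) or ceil(n/r); two vertices adjacent iff in different parts. *)
Definition turan_graph (r n : nat) : {set {set 'I_n}} :=
  [set e : {set 'I_n} | [exists i : 'I_n, exists j : 'I_n,
      (e == [set i; j]) && (i %% r != j %% r)]].

Definition gen_ex (n : nat) (V : finType) (EH : {set {set V}})
    (W : finType) (EF : {set {set W}}) : nat :=
  \max_(E : {set {set 'I_n}} | simple_graph E && (count_copies EF E == 0))
     count_copies EH E.

Definition turan_good (V : finType) (EH : {set {set V}}) (k : nat) : Prop :=
  exists n0, forall n, n0 <= n ->
    gen_ex n EH (complete_graph k) = count_copies EH (turan_graph k.-1 n).

(* Main.v *)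
From mathcomp Require Import all_boot zify.
Require Import Defs.
From Stdlib Require Import ZArith Lia.
Ltac pos := repeat first [apply Z.add_nonneg_nonneg | apply Z.mul_nonneg_nonneg | lia].
Local Open Scope Z_scope.
Definition EE (a b c : Z) := (2*a+b)*(2*a+b-1)*(a+2*b+3*c-1) + (2*a+2*b+c-1)*(2*a+2*b+c-2)*(2*b+c-a-3).
Lemma EE_nonneg a b c : 0 <= a -> 0 <= b -> 0 <= c -> 2 <= b + c -> 0 <= EE a b c.
Proof.
intros ha hb hc hbc.
destruct (Z.eq_dec b 0) as [b0|bn].
- subst b.
  destruct (Z.eq_dec a 0) as [a0|an].
  + subst a. replace c with ((c-2)+2) by ring. set (c' := c - 2).
    assert (0 <= c') by (unfold c'; lia). clearbody c'.
    destruct (Z.eq_dec c' 0) as [e|e]. { subst; unfold EE; lia. }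
    replace c' with ((c'-1)+1) by ring. set (d := c' - 1). assert (0 <= d) by (unfold d; lia). clearbody d.
    replace (EE 0 0 (d+1+2)) with (2*d + 3*d*d + 1*d*d*d) by (unfold EE; ring). pos.
  + replace a with ((a-1)+1) by ring. set (a' := a - 1). assert (0 <= a') by (unfold a'; lia). clearbody a'.
    replace c with ((c-2)+2) by ring. set (c' := c - 2).
    assert (0 <= c') by (unfold c'; lia). clearbody c'.
    replace (EE (a'+1) 0 (c'+2)) with (2*c' + 3*c'*c' + 1*c'*c'*c' + 12*a' + 15*a'*c' + 3*a'*c'*c' + 12*a'*a' + 12*a'*a'*c') by (unfold EE; ring). pos.
- destruct (Z.eq_dec c 0) as [c0|cn].
  + subst c. replace b with ((b-2)+2) by ring. set (b' := b - 2).
    assert (0 <= b') by (unfold b'; lia). clearbody b'.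
    replace (EE a (b'+2) 0) with (12 + 35*b' + 33*b'*b' + 10*b'*b'*b' + 24*a + 45*a*b' + 21*a*b'*b' + 12*a*a + 12*a*a*b') by (unfold EE; ring). pos.
  + replace b with ((b-1)+1) by ring. set (b' := b - 1). assert (0 <= b') by (unfold b'; lia). clearbody b'.
    replace c with ((c-1)+1) by ring. set (c' := c - 1). assert (0 <= c') by (unfold c'; lia). clearbody c'.
    replace (EE a (b'+1) (c'+1)) with (2*c' + 3*c'*c' + 1*c'*c'*c' + 8*b' + 15*b'*c' + 6*b'*c'*c' + 18*b'*b' + 15*b'*b'*c' + 10*b'*b'*b' + 6*a + 9*a*c' + 3*a*c'*c' + 27*a*b' + 24*a*b'*c' + 21*a*b'*b' + 12*a*a + 12*a*a*c' + 12*a*a*b') by (unfold EE; ring). pos.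
Qed.
Lemma keyZ (P q r C1 C2 C3 C4 : Z) : 0 <= q -> q <= r -> r <= P -> q + 2 <= P ->
  6*C1 = (q+r)*(q+r-1)*(q+r-2) -> 6*C2 = (q+r+1)*(q+r+1-1)*(q+r+1-2) ->
  6*C3 = (P+r)*(P+r-1)*(P+r-2) -> 6*C4 = (P+r-1)*(P+r-1-1)*(P+r-1-2) ->
  P*C1 + q*C3 <= (P-1)*C2 + (q+1)*C4.
Proof.
intros h0 h1 h2 h3 e1 e2 e3 e4.
assert (H : 6*((P-1)*C2 + (q+1)*C4) - 6*(P*C1 + q*C3) = (P-1)*(6*C2) + (q+1)*(6*C4) - P*(6*C1) - q*(6*C3)) by ring.
rewrite e1 e2 e3 e4 in H.
assert (H2 : (P - 1) * ((q+r+1)*(q+r+1-1)*(q+r+1-2)) + (q + 1) * ((P+r-1)*(P+r-1-1)*(P+r-1-2)) -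
     P * ((q + r) * (q + r - 1) * (q + r - 2)) - q * ((P + r) * (P + r - 1) * (P + r - 2)) = EE q (r-q) (P-r)) by (unfold EE; ring).
assert (H3 := EE_nonneg q (r-q) (P-r) ltac:(lia) ltac:(lia) ltac:(lia) ltac:(lia)).
lia.
Qed.
Local Close Scope Z_scope.

Lemma bin3 k : 6 * 'C(k,3) + 3*k*k = k*k*k + 2*k.
Proof.
case: k => [|[|[|k]]] //.
have := bin_ffact k.+3 3. rewrite !ffactnS ffactn0 /=.
have -> : 3`! = 6 by []. move=> h. nia.
Qed.

Lemma bin3Z k (z : Z) : Z.of_nat k = z -> (6 * Z.of_nat 'C(k,3) = z*(z-1)*(z-2))%Z.
Proof. move=> <-. have := bin3 k. lia. Qed.

Lemma key p q r : q <= r -> r <= p.+1 -> q.+2 <= p.+1 ->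
  p.+1 * 'C(q+r,3) + q * 'C(p.+1+r,3) <= p * 'C(q.+1+r,3) + q.+1 * 'C(p+r,3).
Proof.
move=> h1 h2 h3.
have e1 := bin3Z (q+r) (Z.of_nat q + Z.of_nat r)%Z ltac:(lia).
have e2 := bin3Z (q.+1+r) (Z.of_nat q + Z.of_nat r + 1)%Z ltac:(lia).
have e3 := bin3Z (p.+1+r) (Z.of_nat p + 1 + Z.of_nat r)%Z ltac:(lia).
have e4 := bin3Z (p+r) (Z.of_nat p + 1 + Z.of_nat r - 1)%Z ltac:(lia).
have := keyZ (Z.of_nat p + 1)%Z (Z.of_nat q) (Z.of_nat r) _ _ _ _ ltac:(lia) ltac:(lia) ltac:(lia) ltac:(lia) e1 e2 e3 e4.
lia.
Qed.

Definition Phi p q r := p * 'C(q + r, 3) + q * 'C(p + r, 3) + r * 'C(p + q, 3).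

Lemma Phi12 p q r : Phi p q r = Phi q p r.
Proof. by rewrite /Phi (addnC p q); lia. Qed.

Lemma Phi23 p q r : Phi p q r = Phi p r q.
Proof. by rewrite /Phi (addnC q r); lia. Qed.

Lemma step p q r : q <= r -> r <= p.+1 -> q.+2 <= p.+1 -> Phi p.+1 q r <= Phi p q.+1 r.
Proof.
move=> h1 h2 h3; rewrite /Phi -addSnnS; apply: leq_add => //; exact: key.
Qed.

Lemma opt n p q r : p + q + r = n -> Phi p q r <= Phi ((n+2)%/3) ((n+1)%/3) (n%/3).
Proof.
suff H : forall k p q r, p*p+q*q+r*r < k -> p + q + r = n ->
   Phi p q r <= Phi ((n+2)%/3) ((n+1)%/3) (n%/3) by apply: H.
elim=> [//|k IH] {}p {}q {}r hk hs.
wlog [hqp hrp] : p q r hk hs / q <= p /\ r <= p.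
  move=> W.
  case: (leqP q p) => hqp; case: (leqP r p) => hrp.
  - by apply: W.
  - rewrite Phi23 Phi12 Phi23; apply: W; lia.
  - rewrite Phi12; apply: W; lia.
  - case: (leqP r q) => hrq.
      rewrite Phi12; apply: W; lia.
    rewrite Phi23 Phi12 Phi23; apply: W; lia.
wlog hqr : q r hk hs hqp hrp / q <= r.
  move=> W; case: (leqP q r) => h; first by apply: W.
  rewrite Phi23; apply: W; lia.
case: (leqP p q.+1) => hb.
  have -> : p = (n+2)%/3 by lia.
  have -> : q = n%/3 by lia.
  have -> : r = (n+1)%/3 by lia.
  by rewrite Phi23.
case: p hk hs hqp hrp hb => [|p] hk hs hqp hrp hb; first by [].
apply: leq_trans (@step p q r hqr hrp hb) _.
apply: IH; nia.
Qed.
Set Implicit Arguments. Unset Strict Implicit. Unset Printing Implicit Defensive.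

Definition Nb (T : finType) (E : {set {set T}}) (v : T) : {set T} := [set x | [set v; x] \in E].

Lemma simple_irr (T : finType) (E : {set {set T}}) x : simple_graph E -> [set x; x] \notin E.
Proof.
move=> /forall_inP sE; apply/negP => h; have := sE _ h.
by rewrite setUid cards1.
Qed.

Lemma img_pre (T : finType) (f : 'I_4 -> T) (e : {set T}) :
  e \subset f @: setT -> f @: (f @^-1: e) = e.
Proof.
move=> se; apply/setP => x; apply/imsetP/idP => [[y]|xe].
  by rewrite inE => ye ->.
have /imsetP[y _ exy] := subsetP se x xe.
by apply: (@ex_intro2 _ _ _ y); rewrite // inE -exy.
Qed.

Definition Fstar (T : finType) (f : 'I_4 -> T) : {set {set T}} :=
  [set [set f ord0; x] | x in f @: [set~ ord0]].

Lemma pair_img (T : finType) (f : 'I_4 -> T) i j : f @: [set i; j] = [set f i; f j].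
Proof. by rewrite imsetU1 imset_set1. Qed.

Lemma star_img (T : finType) (f : 'I_4 -> T) (e : {set 'I_4}) :
  injective f -> (e \in star4) = (f @: e \in Fstar f).
Proof.
move=> fi; apply/idP/idP.
- case/imsetP => i; rewrite inE => i0 ->; rewrite pair_img.
  apply/imsetP; exists (f i) => //; apply/imsetP; exists i => //; by rewrite !inE.
- case/imsetP => x /imsetP [i]; rewrite !inE => i0 -> e_eq.
  rewrite -pair_img in e_eq; rewrite (imset_inj fi e_eq).
  by apply/imsetP; exists i => //; rewrite inE.
Qed.

Definition Dset (T : finType) (E : {set {set T}}) :=
  [set cL : T * {set T} | (cL.2 \subset Nb E cL.1) && (#|cL.2| == 3)].
Definition phi (T : finType) (cL : T * {set T}) : {set T} * {set {set T}} :=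
  (cL.1 |: cL.2, [set [set cL.1; x] | x in cL.2]).
Definition Sset (T : finType) (E : {set {set T}}) :=
  [set p : {set T} * {set {set T}} |
      [&& p.2 \subset E, [forall e in p.2, e \subset p.1] & iso_to star4 p.1 p.2]].

Lemma cardD (T : finType) (E : {set {set T}}) : #|Dset E| = \sum_(v : T) 'C(#|Nb E v|, 3).
Proof.
rewrite -sum1_card.
have -> : \sum_(v : T) 'C(#|Nb E v|,3) =
   \sum_(v : T) \sum_(L : {set T} | (L \subset Nb E v) && (#|L| == 3)) 1.
  apply: eq_bigr => v _; rewrite -(cards_draws (Nb E v) 3) -sum1_card.
  by apply: eq_bigl => L; rewrite inE.
rewrite pair_big_dep /=; apply: eq_bigl => -[c L]; by rewrite inE.
Qed.

Lemma S_sub (T : finType) (E : {set {set T}}) : Sset E \subset (@phi T) @: Dset E.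
Proof.
apply/subsetP => -[U F]; rewrite inE /= => /and3P [FE /forall_inP FU
   /existsP [f /and3P [/injectiveP fi /eqP fU /forallP fF]]].
have fF' e : (e \in star4) = (f @: e \in F) by apply/eqP.
apply/imsetP; exists (f ord0, f @: [set~ ord0]).
- rewrite inE /=; apply/andP; split.
  + apply/subsetP => x /imsetP [i]; rewrite !inE => i0 ->.
    rewrite -pair_img; apply: (subsetP FE); rewrite -fF'.
    by apply/imsetP; exists i => //; rewrite inE.
  + by rewrite card_imset // cardsC1 card_ord.
- rewrite /phi /=; congr pair.
  + rewrite -fU; have -> : [set: 'I_4] = ord0 |: [set~ ord0] by apply/setP => i; rewrite !inE; case: eqP.
    by rewrite imsetU1.
  + apply/setP => e; apply/idP/idP => [eF|eS].
    * have se : e \subset f @: setT by rewrite fU; apply: FU.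
      rewrite -(img_pre se) -(star_img _ fi) fF' img_pre //.
    * have se : e \subset f @: setT.
        case/imsetP: eS => x /imsetP [i _ ->] ->.
        by apply/subsetP => z; rewrite !inE => /orP [] /eqP ->; apply: imset_f.
      rewrite -(img_pre se) -fF' (star_img _ fi) img_pre //.
Qed.

Lemma phiD_sub (T : finType) (E : {set {set T}}) : simple_graph E -> (@phi T) @: Dset E \subset Sset E.
Proof.
move=> sE; apply/subsetP => p /imsetP [[c L]]; rewrite inE /= => /andP [LN /eqP L3] ->.
have cL : c \notin L.
  by apply/negP => cl; have := subsetP LN c cl; rewrite inE; apply/negP; apply: simple_irr.
pose s := enum L.
have ss : size s = 3 by rewrite -cardE.
pose f := [ffun i : 'I_4 => if i == ord0 then c else nth c s i.-1].
have f0 : f ord0 = c by rewrite ffunE eqxx.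
have fL : forall i, i != ord0 -> f i \in L.
  move=> i i0; rewrite ffunE (negbTE i0) -mem_enum; apply: mem_nth; rewrite ss.
  by have := ltn_ord i; lia.
have fi : injective f.
  move=> i j.
  case: (eqVneq i ord0) => [->|i0]; case: (eqVneq j ord0) => [->|j0] //.
  - by move=> h; have := fL j j0; rewrite -h f0 (negbTE cL).
  - by move=> h; have := fL i i0; rewrite h f0 (negbTE cL).
  - rewrite !ffunE (negbTE i0) (negbTE j0) => /eqP.
    have hi3 : i.-1 < 3 by have := ltn_ord i; lia.
    have hj3 : j.-1 < 3 by have := ltn_ord j; lia.
    rewrite nth_uniq ?enum_uniq ?ss //.
    move=> /eqP h; apply: ord_inj.
    have hi : nat_of_ord i != 0 by [].
    have hj : nat_of_ord j != 0 by [].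
    lia.
have fS : f @: [set~ ord0] = L.
  apply/eqP; rewrite eqEcard card_imset // cardsC1 card_ord L3 leqnn andbT.
  by apply/subsetP => x /imsetP [i] i0 ->; apply: fL; move: i0; rewrite !inE.
have fT : f @: setT = c |: L.
  have -> : [set: 'I_4] = ord0 |: [set~ ord0] by apply/setP => i; rewrite !inE; case: eqP.
  by rewrite imsetU1 f0 fS.
rewrite inE /=; apply/and3P; split.
- apply/subsetP => e /imsetP [x xL ->]; have := subsetP LN x xL; by rewrite inE.
- apply/forall_inP => e /imsetP [x xL ->]; apply/subsetP => z.
  by rewrite !inE => /orP [] /eqP ->; rewrite ?eqxx ?xL ?orbT.
- apply/existsP; exists f; apply/and3P; split; [by apply/injectiveP | by rewrite fT | ].
  apply/forallP => e; rewrite (star_img e fi) /Fstar f0 fS; exact: eqxx.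
Qed.

Lemma phi_inj (T : finType) (E : {set {set T}}) : simple_graph E -> {in Dset E &, injective (@phi T)}.
Proof.
move=> sE [c L] [c' L']; rewrite !inE /= => /andP [LN /eqP L3] /andP [LN' /eqP L3'] [eU eF].
have cL : c \notin L.
  by apply/negP => cl; have := subsetP LN c cl; rewrite inE; apply/negP; apply: simple_irr.
have cL' : c' \notin L'.
  by apply/negP => cl; have := subsetP LN' c' cl; rewrite inE; apply/negP; apply: simple_irr.
have cc : c = c'.
  case: (eqVneq c c') => // ne; exfalso.
  have : 0 < #|L :\ c'|.
    have := cardsD1 c' L; rewrite L3; case: (c' \in L) => /=; lia.
  case/card_gt0P => x; rewrite !inE => /andP [xc' xL].
  have : [set c; x] \in [set [set c'; y] | y in L'] by rewrite -eF; apply: imset_f.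
  case/imsetP => y _ h.
  have : c' \in [set c; x] by rewrite h !inE eqxx.
  rewrite !inE => /orP [] /eqP h'.
  + by move: ne; rewrite h' eqxx.
  + by move: xc'; rewrite h' eqxx.
subst c'; congr pair; by rewrite -(setU1K cL) -(setU1K cL') eU.
Qed.

Lemma count_star (T : finType) (E : {set {set T}}) :
  simple_graph E -> count_copies star4 E = \sum_(v : T) 'C(#|Nb E v|, 3).
Proof.
move=> sE; rewrite -cardD.
have -> : count_copies star4 E = #|Sset E| by [].
apply/eqP; rewrite eqn_leq; apply/andP; split.
- exact: leq_trans (subset_leq_card (S_sub E)) (leq_imset_card _ _).
- rewrite -(card_in_imset (phi_inj sE)); exact: subset_leq_card (phiD_sub sE).
Qed.

Definition K4free (T : finType) (E : {set {set T}}) :=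
  forall x y v w : T, [set x; y] \in E -> [set x; v] \in E -> [set x; w] \in E ->
    [set y; v] \in E -> [set y; w] \in E -> [set v; w] \in E -> False.

Lemma adj_sym (T : finType) (E : {set {set T}}) x y : ([set x; y] \in E) = ([set y; x] \in E).
Proof. by rewrite setUC. Qed.

Lemma K4free_of (T : finType) (E : {set {set T}}) : simple_graph E ->
  count_copies (complete_graph 4) E = 0 -> K4free E.
Proof.
move=> sE c0 x y v w hxy hxv hxw hyv hyw hvw.
pose f := [ffun i : 'I_4 => nth x [:: x; y; v; w] i].
have fa : forall i j, i != j -> [set f i; f j] \in E.
  move=> i j ij; rewrite !ffunE; move: ij.
  case: i => [[|[|[|[|i]]]] Hi] //; case: j => [[|[|[|[|j]]]] Hj] //= _;
   first [done | by rewrite adj_sym].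
have fi : injective f.
  move=> i j fij; apply/eqP; apply/negP => /negP ij.
  by have := fa i j ij; rewrite fij; apply/negP; apply: simple_irr.
pose U := f @: setT.
pose F := [set e : {set T} | (e \subset U) && (#|e| == 2)].
suff : 0 < count_copies (complete_graph 4) E by rewrite c0.
rewrite /count_copies; apply/card_gt0P; exists (U, F); rewrite inE /=; apply/and3P; split.
- apply/subsetP => e; rewrite inE => /andP [eU /cards2P [a [b [ab eab]]]].
  have : a \in U by apply: (subsetP eU); rewrite eab !inE eqxx.
  have : b \in U by apply: (subsetP eU); rewrite eab !inE eqxx orbT.
  case/imsetP => j _ bj; case/imsetP => i _ ai.
  rewrite eab ai bj; apply: fa; apply: contraNneq ab => ij.
  by rewrite ai bj ij.
- by apply/forall_inP => e; rewrite inE => /andP [].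
- apply/existsP; exists f; apply/and3P; split; [by apply/injectiveP | by [] | ].
  apply/forallP => e; rewrite !inE card_imset // imsetS ?subsetT //.
Qed.

Lemma sum_ind (T : finType) (X : {set T}) c : \sum_(v : T) (v \in X) * c = #|X| * c.
Proof.
rewrite -big_distrl /=; congr (_ * _); rewrite -sum1_card [RHS]big_mkcond /=.
by apply: eq_bigr => v _; case: (v \in X).
Qed.

Lemma major (T : finType) (E : {set {set T}}) : simple_graph E -> K4free E ->
  exists p q r, p + q + r = #|T| /\ \sum_(v : T) 'C(#|Nb E v|, 3) <= Phi p q r.
Proof.
move=> sE k4.
case: (pickP T) => [x0 _ | T0]; last first.
  exists 0, 0, 0; split; first by rewrite eq_card0.
  by rewrite big1 // => v; have := T0 v.
pose x := [arg max_(i > x0) #|Nb E i|].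
have hx : forall v, #|Nb E v| <= #|Nb E x|.
  by rewrite /x; case: arg_maxnP => // i _ H v; apply: H.
set A := Nb E x.
case: (set_0Vmem A) => [A0 | [y0 y0A]].
  exists #|T|, 0, 0; split; first by rewrite !addn0.
  rewrite big1 // => v _; have := hx v; rewrite -/A A0 cards0 leqn0 => /eqP -> //.
pose y := [arg max_(i > y0 in A) #|Nb E i :&: A|].
have [yA hy] : y \in A /\ forall v, v \in A -> #|Nb E v :&: A| <= #|Nb E y :&: A|.
  by rewrite /y; case: arg_maxnP => // i iA H; split => // v vA; apply: H.
set B := Nb E y :&: A.
have BA : B \subset A by apply: subsetIr.
have cA : #|B| + #|A :\: B| = #|A|.
  by have := cardsID B A; rewrite (setIidPr BA).
exists #|~: A|, #|B|, #|A :\: B|; split.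
  by have := cardsC A; lia.
apply: (@leq_trans (\sum_(v : T) ((v \in ~: A) * 'C(#|B| + #|A :\: B|, 3)
   + (v \in B) * 'C(#|~: A| + #|A :\: B|, 3) + (v \in A :\: B) * 'C(#|~: A| + #|B|, 3)))); last first.
  by rewrite !big_split /= !sum_ind.
apply: leq_sum => v _.
have dv : #|Nb E v| = #|Nb E v :&: A| + #|Nb E v :\: A| by rewrite cardsID.
have out : #|Nb E v :\: A| <= #|~: A|.
  by apply: subset_leq_card; rewrite setDE; apply: subsetIr.
case: (boolP (v \in A)) => vA.
- case: (boolP (v \in B)) => vB.
  + rewrite in_setC in_setD vA vB /= mul0n mul1n add0n addn0.
    apply: leq_bin2l; rewrite dv addnC; apply: leq_add => //.
    apply: subset_leq_card; apply/subsetP => w; rewrite !inE => /andP [vw wA].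
    rewrite wA andbT; apply/negP => wy.
    move: vB; rewrite !inE => /andP [yv _].
    move: yA wA vA; rewrite !inE => yA wA vA.
    rewrite andbT in wy; exact: (k4 x y v w yA vA wA yv wy vw).
  + rewrite in_setC in_setD vA (negbTE vB) /= mul0n mul1n !add0n.
    apply: leq_bin2l; rewrite dv addnC; apply: leq_add => //.
    exact: hy.
- have vB : v \notin B by apply: contra vA; apply: (subsetP BA).
  rewrite in_setC in_setD (negbTE vA) (negbTE vB) andbF /= mul1n mul0n !addn0.
  by apply: leq_bin2l; rewrite cA; apply: hx.
Qed.

Lemma adjT n (x y : 'I_n) : ([set x; y] \in turan_graph 3 n) = (x %% 3 != y %% 3).
Proof.
apply/idP/idP => [|h]; last first.
  by rewrite inE; apply/existsP; exists x; apply/existsP; exists y; rewrite eqxx h.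
rewrite inE => /existsP [i /existsP [j /andP [/eqP e ij]]].
apply: contra ij => /eqP xy.
have hi : i \in [set x; y] by rewrite e !inE eqxx.
have hj : j \in [set x; y] by rewrite e !inE eqxx orbT.
by move: hi hj; rewrite !inE => /orP [] /eqP -> /orP [] /eqP ->; rewrite ?xy.
Qed.

Lemma turan_simple n : simple_graph (turan_graph 3 n).
Proof.
apply/forall_inP => e; rewrite inE => /existsP [i /existsP [j /andP [/eqP -> ij]]].
by rewrite cards2; case: (eqVneq i j) ij => [->|]; rewrite ?eqxx.
Qed.

Lemma turan_K4 n : count_copies (complete_graph 4) (turan_graph 3 n) = 0.
Proof.
apply/eqP; rewrite /count_copies cards_eq0; apply/eqP/setP => -[U F]; rewrite !inE /=.
apply/negP => /and3P [FE _ /existsP [f /and3P [/injectiveP fi _ /forallP fF]]].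
have hf : forall i j : 'I_4, i != j -> f i %% 3 != f j %% 3.
  move=> i j ij; rewrite -adjT -pair_img; apply: (subsetP FE).
  by rewrite -(eqP (fF _)) inE cards2 ij.
pose g := fun i : 'I_4 => Ordinal (ltn_pmod (f i) (isT : 0 < 3)).
have gi : injective g.
  move=> i j /(congr1 val) /= e; apply/eqP; apply/negP => /negP ij.
  by have := hf i j ij; rewrite e eqxx.
by have := @leq_card _ _ g gi; rewrite !card_ord.
Qed.

Definition Ck n k := [set x : 'I_n | x %% 3 == k].

Lemma card_Ck n k : k < 3 -> #|Ck n k| = (n + 2 - k) %/ 3.
Proof.
move=> k3.
have -> : #|Ck n k| = \sum_(x < n) (x %% 3 == k : nat).
  rewrite -sum1_card big_mkcond /=; apply: eq_bigr => x _; rewrite inE; by case: (_ == _).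
rewrite -(big_mkord xpredT (fun x => (x %% 3 == k : nat))).
elim: n => [|n IH]; first by rewrite big_geq //; lia.
rewrite big_nat_recr //= IH; case: eqP => /= h; lia.
Qed.

Lemma NbT n (v : 'I_n) : Nb (turan_graph 3 n) v = ~: Ck n (v %% 3).
Proof. by apply/setP => x; rewrite /Nb in_set adjT !inE eq_sym. Qed.

Lemma turan_sum n : \sum_(v : 'I_n) 'C(#|Nb (turan_graph 3 n) v|, 3) =
   Phi ((n+2)%/3) ((n+1)%/3) (n%/3).
Proof.
have hN : forall v : 'I_n, #|Nb (turan_graph 3 n) v| = n - #|Ck n (v %% 3)|.
  by move=> v; rewrite NbT cardsCs setCK card_ord.
rewrite (eq_bigr (fun v => (v \in Ck n 0) * 'C(n - #|Ck n 0|, 3) + (v \in Ck n 1) * 'C(n - #|Ck n 1|, 3)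
   + (v \in Ck n 2) * 'C(n - #|Ck n 2|, 3))); last first.
  move=> v _; rewrite hN !inE; move: (ltn_pmod v (isT : 0 < 3)).
  by case: (v %% 3) => [|[|[|m]]] //= _; rewrite ?mul1n ?mul0n ?addn0 ?add0n.
rewrite !big_split /= !sum_ind !card_Ck //.
have -> : n + 2 - 0 = n + 2 by lia.
have -> : n + 2 - 1 = n + 1 by lia.
have -> : n + 2 - 2 = n by lia.
have -> : n - (n + 2) %/ 3 = (n + 1) %/ 3 + n %/ 3 by lia.
have -> : n - (n + 1) %/ 3 = (n + 2) %/ 3 + n %/ 3 by lia.
have -> : n - n %/ 3 = (n + 2) %/ 3 + (n + 1) %/ 3 by lia.
by [].
Qed.

Theorem proposition3p12 :
  exists n0 : nat, forall n : nat, n0 <= n ->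
    gen_ex n star4 (complete_graph 4) = count_copies star4 (turan_graph 3 n).
Proof.
exists 0 => n _.
have hT : count_copies star4 (turan_graph 3 n) = Phi ((n+2)%/3) ((n+1)%/3) (n%/3).
  by rewrite count_star ?turan_simple // turan_sum.
apply/eqP; rewrite eqn_leq; apply/andP; split.
- rewrite /gen_ex; apply/bigmax_leqP => E /andP [sE /eqP k4].
  rewrite count_star // hT.
  have [p [q [r [hs hle]]]] := major sE (K4free_of sE k4).
  apply: leq_trans hle _; apply: opt; by rewrite hs card_ord.
- rewrite /gen_ex; apply: (leq_bigmax_cond (F := fun E => count_copies star4 E)).
  by rewrite turan_simple turan_K4.
Qed.
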